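(* Let $d \ge 1$, $p \in [0,1/2)$, $\mathbf{x} \in \mathbb{R}^d$, $G > 0$, $\lambda > 0$. Let measurements $y_k = \langle \mathbf{x}, \mathbf{a}_k\rangle + \epsilon_k$ ($k = 0,1,\dots$) be given, where $\epsilon_k = \xi_k\nu_k$ with $\xi_k$ an indicator equal to $1$ with probability $p$, independent of all other variables, and $\nu_k$ arbitrary (possibly dependent on $\mathbf{x}$ and the measurement vectors). Let $\mathcal{F}_k$ be the $\sigma$-algebra generated by $\{\mathbf{a}_0,\epsilon_0\},\dots,\{\mathbf{a}_{k-1},\epsilon_{k-1}\}$, and assume each $\mathbf{a}_k \in \mathbb{R}^d$ has unit norm and is independent of $\mathcal{F}_k$, the vectors $\sqrt d\,\mathbf{a}_k$ are i.i.d. mean-zero isotropic, and for every $\mathcal{F}_k$-measurable $\mathbf{u}$, $\mathbb{E}_{\mathbf{a}_k}[|\langle \mathbf{u},\mathbf{a}_k\rangle| \mid \mathbf{u}] \ge \widetilde{C}\|\mathbf{u}\|_2/\sqrt d$ for a constant $\widetilde C > 0$. Let $\mathbf{x}_0 = 0$, $\mathbf{x}_{k+1} = \mathbf{x}_k + G\lambda^{-k}\mathrm{sign}(y_k - \langle \mathbf{x}_k,\mathbf{a}_k\rangle)\mathbf{a}_k$, $\mathbf{u}_k := \lambda^k(\mathbf{x} - \mathbf{x}_k)/G$ and $Y_k := \|\mathbf{u}_k\|_2^2$, so that $$Y_{k+1} = \lambda^2\Big\{\|\mathbf{u}_k\|^2 - 2\langle \mathbf{u}_k,\mathbf{a}_k\rangle\,\mathrm{sign}\big(\langle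 \mathbf{u}_k,\mathbf{a}_k\rangle + \lambda^k\epsilon_k/G\big) + 1\Big\}.$$ Suppose $$1 < \lambda^2 \le 1 + \widetilde{C}^2\frac{(1-2p)^2}{49d} < \frac{50}{49},$$ and set $a = \frac{1}{2(\lambda^2-1)}$, $\eta = c^*\sqrt{\lambda^2-1}$ with $$c^* = \frac{1}{8\lambda^2}\Big[\frac{\lambda^2(1-2p)\widetilde C}{\sqrt2\sqrt d} - \sqrt{\lambda^2-1}\Big(\frac32 + \frac{\lambda^2}{2}\Big)\Big].$$ Then $$\mathbb{E}\big[e^{\eta(Y_{k+1} - a)}\mathbb{1}_{\{Y_k < a\}} \mid \mathcal{F}_k\big] \le \exp\Big\{\frac{\widetilde C(1-2p)}{6\sqrt d}\Big\}.$$
   Context: $\mathrm{sign}$ is the sign function. *)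

(* Defs.v *)
From HB Require Import structures.
From mathcomp Require Import all_boot all_order all_algebra.
From mathcomp Require Import all_classical all_reals all_analysis.
Set Implicit Arguments. Unset Strict Implicit. Unset Printing Implicit Defensive.
Import Order.TTheory GRing.Theory Num.Theory.
Import numFieldNormedType.Exports.
Local Open Scope classical_set_scope.
Local Open Scope ring_scope.

Section Defs.
Context {R : realType} {d : nat} {dT : measure_display} {T : measurableType dT}.

Definition dotv (u v : 'I_d -> R) : R := \sum_(i < d) u i * v i.
Definition normv (u : 'I_d -> R) : R := Num.sqrt (dotv u u).

(* the sign function, with values in {-1, 1} (sign 0 := 1) *)
Definition sgnR (x : R) : R := if 0 <= x then 1 else -1.

Definition preimgs (f : T -> R) : set (set T) :=
  [set f @^-1` B | B in (measurable : set (set R))].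

Definition gen_vec (X : T -> 'I_d -> R) : set (set T) :=
  \bigcup_(i in [set: 'I_d]) preimgs (fun w => X w i).

Definition sigma_vec (X : T -> 'I_d -> R) : set (set T) := <<s gen_vec X >>.

Definition borel_vec : set (set ('I_d -> R)) :=
  <<s \bigcup_(i in [set: 'I_d])
        [set (fun v : 'I_d -> R => v i) @^-1` B | B in (measurable : set (set R))] >>.

Definition filtF (a : nat -> T -> 'I_d -> R) (eps : nat -> T -> R) (k : nat)
  : set (set T) :=
  <<s \bigcup_(j in [set j : nat | (j < k)%N]) (gen_vec (a j) `|` preimgs (eps j)) >>.

Definition indep2 (P : probability T R) (S1 S2 : set (set T)) : Prop :=
  forall A B, S1 A -> S2 B -> P (A `&` B) = (P A * P B)%E.

Definition mutual_indep (P : probability T R) (S : nat -> set (set T)) : Prop :=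
  forall (s : seq nat) (A : nat -> set T), uniq s ->
    (forall j, j \in s -> S j (A j)) ->
    P (\bigcap_(j in [set` s]) A j) = (\prod_(j <- s) P (A j))%E.

(* E[Z | F] <= c almost surely, for a nonnegative random variable Z, written
   through the defining property of conditional expectation *)
Definition condexp_le (P : probability T R) (F : set (set T)) (Z : T -> R) (c : R)
  : Prop :=
  forall B, F B -> (\int[P]_(w in B) (Z w)%:E <= c%:E * P B)%E.

(* E[Z | G] >= g almost surely (g G-measurable), via the defining property *)
Definition condexp_ge (P : probability T R) (F : set (set T)) (Z g : T -> R)
  : Prop :=
  forall B, F B -> (\int[P]_(w in B) (g w)%:E <= \int[P]_(w in B) (Z w)%:E)%E.

Definition vec_meas_wrt (F : set (set T)) (u : T -> 'I_d -> R) : Prop :=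
  forall i B, measurable B -> F ((fun w => u w i) @^-1` B).

Fixpoint iter_x (x : 'I_d -> R) (G lam : R) (a : nat -> T -> 'I_d -> R)
  (eps : nat -> T -> R) (k : nat) (w : T) : 'I_d -> R :=
  match k with
  | 0 => fun _ => 0
  | k'.+1 => fun i =>
      iter_x x G lam a eps k' w i
      + G * lam ^- k'
        * sgnR (dotv x (a k' w) + eps k' w - dotv (iter_x x G lam a eps k' w) (a k' w))
        * a k' w i
  end.

Definition vec_u (x : 'I_d -> R) (G lam : R) (a : nat -> T -> 'I_d -> R)
  (eps : nat -> T -> R) (k : nat) (w : T) : 'I_d -> R :=
  fun i => lam ^+ k * (x i - iter_x x G lam a eps k w i) / G.

Definition Yk (x : 'I_d -> R) (G lam : R) (a : nat -> T -> 'I_d -> R)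
  (eps : nat -> T -> R) (k : nat) (w : T) : R :=
  normv (vec_u x G lam a eps k w) ^+ 2.

End Defs.

Definition cstar {R : realType} (d : nat) (p Ct lam : R) : R :=
  (8 * lam ^+ 2)^-1 *
  (lam ^+ 2 * (1 - 2 * p) * Ct / (Num.sqrt 2 * Num.sqrt d%:R)
   - Num.sqrt (lam ^+ 2 - 1) * (3 / 2 + lam ^+ 2 / 2)).

(* Main.v *)
Require Import Defs.
From HB Require Import structures.
From mathcomp Require Import all_boot all_order all_algebra.
From mathcomp Require Import all_classical all_reals all_analysis.
From mathcomp Require Import measurable_realfun ring lra.
Import Order.TTheory GRing.Theory Num.Theory.
Import numFieldNormedType.Exports.
Local Open Scope classical_set_scope.
Local Open Scope ring_scope.

Lemma alg (R : realType) (y t z L : R) : 0<y -> y<1 -> 0<t -> 7*t <= y -> 0<z -> z*z*2 = 1 -> L = 1 + t*t ->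
 (L*y*z - t*(3/2+L/2)) * (t*(1/2+L) + 2*L*z) <= 8*L*y/6.
Proof.
move=> y0 y1 t0 ty m0 mm hL.
have e : (L*y*z - t*(3/2+L/2)) * (t*(1/2+L) + 2*L*z) =
  L*L*y*(z*z*2) + (L*z*t)*(y*(1/2+L) - 3 - L) - t*t*((3/2+L/2)*(1/2+L)) by field.
rewrite e mm mulr1.
have h1 : 0 <= L*z*t by rewrite hL; apply: mulr_ge0; [apply: mulr_ge0|]; nra.
have h2 : (L*z*t)*(y*(1/2+L) - 3 - L) <= 0.
  rewrite mulr_ge0_le0 //; rewrite hL; nra.
have h3 : 0 <= t*t*((3/2+L/2)*(1/2+L)) by rewrite hL; nra.
have tt : t*t <= 1/49 by nra.
have h4 : L*L*y <= 8*L*y/6.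
  rewrite -subr_ge0.
  have -> : 8*L*y/6 - L*L*y = (L*y)*(4/3 - L) by field.
  apply: mulr_ge0; rewrite hL; nra.
lra.
Qed.

Lemma bound (R : realType) (d : nat) (p Ct lam Y Y1 : R) :
  (1 <= d)%N -> 0 <= p -> p < 1 / 2 -> 0 < Ct ->
  1 < lam ^+ 2 ->
  lam ^+ 2 <= 1 + Ct ^+ 2 * (1 - 2 * p) ^+ 2 / (49 * d%:R) ->
  1 + Ct ^+ 2 * (1 - 2 * p) ^+ 2 / (49 * d%:R) < 50 / 49 ->
  let aa := (2 * (lam ^+ 2 - 1))^-1 in
  let eta := cstar d p Ct lam * Num.sqrt (lam ^+ 2 - 1) in
  0 <= Y -> Y < aa -> Y1 <= lam ^+ 2 * (Y + Y / Num.sqrt aa + Num.sqrt aa + 1) ->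
  eta * (Y1 - aa) <= Ct * (1 - 2 * p) / (6 * Num.sqrt d%:R).
Proof.
move=> d1 p0 p12 Ct0 l1 l2 l3 aa eta Y0 Ya HY1.
have dpos : (0 : R) < d%:R by rewrite ltr0n.
set D := Num.sqrt d%:R.
have D0 : 0 < D by rewrite sqrtr_gt0.
have DD : D * D = d%:R by rewrite -expr2 sqr_sqrtr // ltW.
set q := Num.sqrt (2 : R).
have q0 : 0 < q by rewrite sqrtr_gt0; lra.
have qq : q * q = 2 by rewrite -expr2 sqr_sqrtr //; lra.
set L := lam ^+ 2.
rewrite -/L in l1 l2 l3.
set t := Num.sqrt (L - 1).
have t0 : 0 < t by rewrite sqrtr_gt0; lra.
have tt : t * t = L - 1 by rewrite -expr2 sqr_sqrtr //; lra.
have aaE : aa = (2 * (t * t))^-1 by rewrite /aa tt.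
have aa0 : 0 < aa by rewrite aaE invr_gt0 mulr_gt0 // mulr_gt0.
set r := Num.sqrt aa.
have r0 : 0 < r by rewrite sqrtr_gt0.
have rr : r * r = aa by rewrite -expr2 sqr_sqrtr // ltW.
set y := Ct * (1 - 2 * p) / D.
have y0 : 0 < y by apply: divr_gt0 => //; nra.
have yy : Ct ^+ 2 * (1 - 2 * p) ^+ 2 / (49 * d%:R) = y * y / 49.
  by rewrite /y -DD; field; exact: lt0r_neq0.
rewrite yy in l2 l3.
have y1 : y < 1 by nra.
have ty : 7 * t <= y by nra.
set z := q^-1.
have z0 : 0 < z by rewrite invr_gt0.
have zz : z * z * 2 = 1 by rewrite -qq /z; field; exact: lt0r_neq0.
have rtz : r * t = z.
  have h : (r * q * t) * (r * q * t) = 1.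
    have -> : (r * q * t) * (r * q * t) = (r * r) * (q * q) * (t * t) by ring.
    by rewrite rr qq aaE; field; nra.
  have hp : 0 < r * q * t by rewrite !mulr_gt0.
  have h2 : r * q * t = 1 by nra.
  have h3 : r * t * q = 1 by rewrite -h2; ring.
  by rewrite /z -[q^-1]mul1r -h3; field; exact: lt0r_neq0.
have cE : cstar d p Ct lam = (L * y * z - t * (3/2 + L/2)) / (8 * L).
  rewrite /cstar -/L -/t -/D -/q /y /z; field.
  have L0 : 0 < L by lra.
  by rewrite !gt_eqF.
have L0 : 0 < L by lra.
have q2 : q <= 2 by nra.
have zq : z * q = 1 by rewrite /z mulVf // gt_eqF.
have zh : 1/2 <= z by nra.
have Ll : L < 50/49 by lra.
have c0 : 1/2 <= L*z by nra.
have c1 : y/2 <= L*y*z.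
  have -> : L*y*z = y*(L*z) by ring.
  nra.
have c2 : t*(3/2+L/2) <= 7*t/2 by nra.
have cs0 : 0 <= cstar d p Ct lam by rewrite cE divr_ge0 //; lra.
have eta0 : 0 <= eta by rewrite /eta mulr_ge0 // -/L -/t ltW.
have Yr : Y / r <= r by rewrite ler_pdivrMr // rr; lra.
have HY : Y1 - aa <= L*(aa + 2*r + 1) - aa.
  have : Y + Y / r + r + 1 <= aa + 2*r + 1 by lra.
  move=> /(ler_wpM2l (ltW L0)) h; rewrite -/L -/r in HY1; lra.
have E : t * (L*(aa+2*r+1) - aa) = t*(1/2+L) + 2*L*z.
  have -> : t*(L*(aa+2*r+1)-aa) = (L-1)*t*aa + 2*L*(r*t) + t*L by ring.
  by rewrite rtz -tt aaE; field; rewrite gt_eqF.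
have F := @alg _ y t z L y0 y1 t0 ty z0 zz (_ : L = 1 + t*t).
have hL : L = 1 + t*t by lra.
have {F} := F hL.
move=> F.
apply: (le_trans (ler_wpM2l eta0 HY)).
rewrite /eta -/L -/t -[cstar _ _ _ _ * t * _]mulrA E cE mulrAC.
have -> : Ct*(1-2 * p)/(6*D) = (8*L*y/6)/(8*L) by rewrite /y; field; rewrite !gt_eqF.
apply: ler_wpM2r; last exact: F.
by rewrite invr_ge0; lra.
Qed.

Section Aux.
Local Open Scope ereal_scope.
Lemma ge0_le_integral_nm (R : realType) (dT : measure_display) (T : measurableType dT)
  (mu : {measure set T -> \bar R}) (D : set T) (f g : T -> \bar R) :
  (forall x, D x -> 0 <= f x) -> (forall x, D x -> f x <= g x) ->
  \int[mu]_(x in D) f x <= \int[mu]_(x in D) g x.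
Proof.
move=> f0 fg.
have g0 : forall x, D x -> 0 <= g x by move=> x Dx; exact: le_trans (f0 x Dx) (fg x Dx).
rewrite (ge0_integralE _ f0) (ge0_integralE _ g0) /=.
apply: ereal_sup_le => _ [h hf <-]; exists h => // x.
apply: le_trans (hf x) _; rewrite /patch; case: ifP => // /set_mem Dx; exact: fg.
Qed.
End Aux.

Lemma dot_bound (R : realType) (d : nat) (u av : 'I_d -> R) (s lam r : R) :
  s * s = 1 -> dotv av av = 1 -> 0 < r ->
  dotv (fun i => lam * (u i - s * av i)) (fun i => lam * (u i - s * av i))
  <= lam ^+ 2 * (dotv u u + dotv u u / r + r + 1).
Proof.
move=> ss aa1 r0.
have -> : lam ^+ 2 * (dotv u u + dotv u u / r + r + 1) =
  \sum_(i < d) lam ^+ 2 * (u i * u i + u i * u i / r + r * (av i * av i) + av i * av i).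
  rewrite -mulr_sumr; congr (_ * _).
  rewrite !big_split /= -mulr_suml -mulr_sumr.
  have -> : \sum_(i < d) av i * av i = 1 by exact: aa1.
  by rewrite mulr1.
apply: ler_sum => i _.
have h : 0 <= (u i + s * r * av i) * (u i + s * r * av i) / r.
  by apply: divr_ge0; [rewrite -expr2 sqr_ge0 | exact: ltW].
have e : lam ^+ 2 * (u i * u i + u i * u i / r + r * (av i * av i) + av i * av i)
   - lam * (u i - s * av i) * (lam * (u i - s * av i))
   = lam ^+ 2 * ((u i + s * r * av i) * (u i + s * r * av i) / r)
     + lam ^+ 2 * (1 - s * s) * (r + 1) * (av i * av i).
  by rewrite expr2; field; exact: lt0r_neq0.
rewrite ss subrr mulr0 !mul0r addr0 in e.
rewrite -subr_ge0 e; apply: mulr_ge0 => //; exact: sqr_ge0.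
Qed.

Lemma dot_ge0 (R : realType) (d : nat) (u : 'I_d -> R) : 0 <= dotv u u.
Proof. by apply: sumr_ge0 => i _; rewrite -expr2 sqr_ge0. Qed.

Lemma normv_sq (R : realType) (d : nat) (u : 'I_d -> R) : normv u ^+ 2 = dotv u u.
Proof. by rewrite /normv sqr_sqrtr // dot_ge0. Qed.

Lemma sgnR_sq (R : realType) (v : R) : sgnR v * sgnR v = 1.
Proof. by rewrite /sgnR; case: ifP => _; rewrite ?mulr1 ?mulrNN ?mulr1. Qed.

Theorem lemma5p3 (R : realType) (d : nat) (dT : measure_display)
  (T : measurableType dT) (P : probability T R)
  (p G lam Ct : R) (x : 'I_d -> R)
  (a : nat -> T -> 'I_d -> R) (xi nu : nat -> T -> R) :
  (1 <= d)%N ->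
  0 <= p -> p < 1 / 2 ->
  0 < G -> 0 < lam -> 0 < Ct ->
  (* measurability of the random variables *)
  (forall k i, measurable_fun [set: T] (fun w => a k w i)) ->
  (forall k, measurable_fun [set: T] (xi k)) ->
  (forall k, measurable_fun [set: T] (nu k)) ->
  (* xi_k is an indicator equal to 1 with probability p, independent of all
     other variables *)
  (forall k w, xi k w = 0 \/ xi k w = 1) ->
  (forall k, P (xi k @^-1` [set 1]) = p%:E) ->
  (forall k, indep2 P (<<s preimgs (xi k) >>)
     (<<s \bigcup_(j in [set: nat]) (gen_vec (a j) `|` preimgs (nu j))
          `|` \bigcup_(j in [set j : nat | j != k]) preimgs (xi j) >>)) ->
  let eps := fun k w => xi k w * nu k w in
  (* unit norm, independent of F_k *)
  (forall k w, normv (a k w) = 1) ->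
  (forall k, indep2 P (sigma_vec (a k)) (filtF a eps k)) ->
  (* sqrt d a_k i.i.d., mean zero, isotropic *)
  mutual_indep P (fun k => sigma_vec (a k)) ->
  (forall k V, borel_vec V -> P (a k @^-1` V) = P (a 0%N @^-1` V)) ->
  (forall k i, (\int[P]_w (Num.sqrt d%:R * a k w i)%:E = 0)%E) ->
  (forall k i j, (\int[P]_w ((Num.sqrt d%:R * a k w i) * (Num.sqrt d%:R * a k w j))%:E
                  = (i == j)%:R%:E)%E) ->
  (* E_{a_k}[ |<u, a_k>| | u ] >= Ct ||u|| / sqrt d for F_k-measurable u *)
  (forall k (u : T -> 'I_d -> R), vec_meas_wrt (filtF a eps k) u ->
     condexp_ge P (sigma_vec u) (fun w => `|dotv (u w) (a k w)|)
       (fun w => Ct * normv (u w) / Num.sqrt d%:R)) ->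
  (* step size condition *)
  1 < lam ^+ 2 ->
  lam ^+ 2 <= 1 + Ct ^+ 2 * (1 - 2 * p) ^+ 2 / (49 * d%:R) ->
  1 + Ct ^+ 2 * (1 - 2 * p) ^+ 2 / (49 * d%:R) < 50 / 49 ->
  let aa := (2 * (lam ^+ 2 - 1))^-1 in
  let eta := cstar d p Ct lam * Num.sqrt (lam ^+ 2 - 1) in
  forall k : nat,
    condexp_le P (filtF a eps k)
      (fun w => expR (eta * (Yk x G lam a eps k.+1 w - aa))
                * (if Yk x G lam a eps k w < aa then 1 else 0))
      (expR (Ct * (1 - 2 * p) / (6 * Num.sqrt d%:R))).
Proof.
move=> d1 p0 p12 G0 lam0 Ct0 ma mxi mnu xi01 Pxi indxi eps na1 inda mind iid mean0 iso condk l1 l2 l3 aa eta k B FB.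
have mB : measurable B.
  move: B FB; apply: smallest_sub; first exact: sigma_algebra_measurable.
  move=> A [j _ [[i _ [B0 mB0 <-]]|[B0 mB0 <-]]].
  - by rewrite -(setTI (_ @^-1` _)); exact: ma.
  - rewrite -(setTI (_ @^-1` _)); apply: (measurable_funM (mxi j) (mnu j)) => //.
set c := expR (Ct * (1 - 2 * p) / (6 * Num.sqrt d%:R)).
have pw : forall w, expR (eta * (Yk x G lam a eps k.+1 w - aa))
                * (if Yk x G lam a eps k w < aa then 1 else 0) <= c.
  move=> w; case: ifP => hY; last by rewrite mulr0 /c expR_ge0.
  rewrite mulr1 /c ler_expR.
  have aa0 : 0 < aa by rewrite /aa invr_gt0; lra.
  apply: (@bound R d p Ct lam (Yk x G lam a eps k w)) => //.
    by rewrite /Yk normv_sq dot_ge0.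
  set s := sgnR (dotv x (a k w) + eps k w - dotv (iter_x x G lam a eps k w) (a k w)).
  have uE : vec_u x G lam a eps k.+1 w =
     (fun i => lam * (vec_u x G lam a eps k w i - s * a k w i)).
    apply: funext => i; rewrite /vec_u /= -/s exprS.
    field; apply/andP; split; [exact: lt0r_neq0 | ].
    by rewrite expf_neq0 // lt0r_neq0.
  have aa1 : dotv (a k w) (a k w) = 1.
    by rewrite -normv_sq na1 expr1n.
  rewrite /Yk uE !normv_sq; apply: dot_bound => //.
    exact: sgnR_sq.
  by rewrite sqrtr_gt0.
apply: le_trans (@ge0_le_integral_nm _ _ _ P B _ (fun _ => c%:E) _ _) _.
- move=> w _; rewrite lee_fin; case: ifP => _; rewrite ?mulr1 ?mulr0 ?expR_ge0 //.
- by move=> w _; rewrite lee_fin.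
- by rewrite (integral_cst P mB).
Qed.
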